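(* Assume $\mathbf a,\mathbf b\in\Delta^n$ with strictly positive entries, and let $\eta>0$. Let $(\mathbf u^*,\mathbf v^* )$ be the $(\mathbf u,\mathbf v)$-part of an optimal solution of the dual problem $\max_{(\mathbf u,\mathbf v,\mathbf t)\in\mathcal X}\{-\frac{1}{4\eta}\sum_{ij}t_{ij}^2-\tau\langle e^{-\mathbf u/\tau},\mathbf a\rangle-\tau\langle e^{-\mathbf v/\tau},\mathbf b\rangle+\mathbf a^\top\mathbf 1_n+\mathbf b^\top\mathbf 1_n\}$, $\mathcal X=\{(\mathbf u,\mathbf v,\mathbf t):t_{ij}\ge0,\ t_{ij}\ge u_i+v_j-C_{ij}\}$. Then for all $i,j\in[n]$, $u^*_i\le\|C\|_\infty+2\eta$ and $v^*_j\le\|C\|_\infty+2\eta$.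
   Context: Let $n\ge1$, $C\in\mathbb{R}^{n\times n}$ with nonnegative entries and $\|C\|_\infty=\max_{i,j}|C_{ij}|$; $\tau>0$; $\Delta^n=\{\mathbf x\in\mathbb{R}^n_+:\sum_i x_i=1\}$. $e^{-\mathbf u/\tau}$ is the entrywise exponential and $\mathbf 1_n$ the all-ones vector. *)

(* Defs.v *)
From HB Require Import structures.
From mathcomp Require Import all_boot all_order all_algebra.
From mathcomp Require Import all_classical all_reals all_analysis.
Set Implicit Arguments. Unset Strict Implicit. Unset Printing Implicit Defensive.
Import Order.TTheory GRing.Theory Num.Theory.
Local Open Scope ring_scope.

Section Defs.
Variables (R : realType) (n : nat).

Definition in_simplex (x : 'I_n -> R) : Prop :=
  (forall i, 0 <= x i) /\ \sum_(i < n) x i = 1.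

Definition mx_supnorm (C : 'M[R]_n) : R :=
  \big[Num.max/0]_(i < n) \big[Num.max/0]_(j < n) `|C i j|.

Definition dual_feasible (C : 'M[R]_n) (u v : 'I_n -> R) (t : 'M[R]_n) : Prop :=
  forall i j, 0 <= t i j /\ u i + v j - C i j <= t i j.

Definition dual_obj (eta tau : R) (a b : 'I_n -> R)
    (u v : 'I_n -> R) (t : 'M[R]_n) : R :=
  - (4 * eta)^-1 * (\sum_(i < n) \sum_(j < n) t i j ^+ 2)
  - tau * (\sum_(i < n) expR (- u i / tau) * a i)
  - tau * (\sum_(j < n) expR (- v j / tau) * b j)
  + \sum_(i < n) a i + \sum_(j < n) b j.

Definition dual_optimal (C : 'M[R]_n) (eta tau : R) (a b : 'I_n -> R)
    (u v : 'I_n -> R) (t : 'M[R]_n) : Prop :=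
  dual_feasible C u v t /\
  forall u' v' t', dual_feasible C u' v' t' ->
    dual_obj eta tau a b u' v' t' <= dual_obj eta tau a b u v t.

End Defs.

(* Main.v *)
Require Import Defs.
From HB Require Import structures.
From mathcomp Require Import all_boot all_order all_algebra.
From mathcomp Require Import all_classical all_reals all_analysis.
From mathcomp Require Import ring lra.
Import Order.TTheory GRing.Theory Num.Theory.
Local Open Scope ring_scope.

Lemma exp_chord (R : realType) (y z : R) : z <= y -> expR y - expR z <= expR y * (y - z).
Proof.
move=> hzy.
have -> : expR z = expR y * expR (z - y) by rewrite -expRD; congr expR; ring.
have h := expR_ge1Dx (z - y).
have hy := expR_gt0 y.
have : expR y * (1 + (z - y)) <= expR y * expR (z - y) by rewrite ler_pM2l.
nra.
Qed.

Lemma simplex_le1 (R : realType) (n : nat) (a : 'I_n -> R) k :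
  in_simplex a -> a k <= 1.
Proof.
move=> [ha hs]; rewrite -hs (bigD1 k) //= lerDl; exact: sumr_ge0.
Qed.

Lemma sum_upd (R : realType) (n : nat) (F G : 'I_n -> R) k :
  (forall i, i != k -> G i = F i) ->
  \sum_(i < n) G i = \sum_(i < n) F i + (G k - F k).
Proof.
move=> h; rewrite (bigD1 k) //= [in RHS](bigD1 k) //=.
rewrite (eq_bigr (fun i => F i)); last by move=> i /h.
ring.
Qed.

Lemma stepA (R : realType) (n : nat) (C : 'M[R]_n) (tau eta : R)
  (a b : 'I_n -> R) (u v : 'I_n -> R) (t : 'M[R]_n) :
  (forall i j, 0 <= C i j) -> 0 < tau -> (forall i, 0 < a i) ->
  dual_optimal C eta tau a b u v t ->
  (forall j, v j < 0) -> forall k, 0 <= u k.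
Proof.
move=> HC Ht Ha [Hf Hopt] Hv k; rewrite leNgt; apply/negP => Huk.
pose u' := fun i => if i == k then 0 else u i.
have Hf' : dual_feasible C u' v t.
  move=> i j; have [H1 H2] := Hf i j; split => //; rewrite /u'.
  case: eqP => _ //; have := Hv j; have := HC i j; lra.
have := Hopt u' v t Hf'; rewrite /dual_obj.
rewrite (@sum_upd _ _ (fun i => expR (- u i / tau) * a i)
   (fun i => expR (- u' i / tau) * a i) k); last first.
  by move=> i /negbTE hi; rewrite /u' hi.
rewrite /u' eqxx.
have : 1 < expR (- u k / tau).
  rewrite -expR0 ltr_expR mulNr oppr_gt0 pmulr_llt0 ?invr_gt0 //.
have := Ha k.
rewrite oppr0 mul0r expR0.
set A := \sum_(i < n) _.
move=> hak hexp.
have : 0 < tau * (expR (- u k / tau) * a k - 1 * a k).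
  apply: mulr_gt0 => //; rewrite -mulrBl mulr_gt0 // subr_gt0 //.
rewrite mulrDr; lra.
Qed.


Lemma stepB (R : realType) (n : nat) (C : 'M[R]_n) (tau eta : R)
  (a b : 'I_n -> R) (u v : 'I_n -> R) (t : 'M[R]_n) :
  (0 < n)%N ->
  (forall i j, 0 <= C i j) -> 0 < tau -> in_simplex a -> in_simplex b ->
  (forall i, 0 < a i) ->
  dual_optimal C eta tau a b u v t ->
  exists j, 0 <= v j.
Proof.
move=> Hn HC Ht [Ha0 Ha1] [Hb0 Hb1] Ha Hopt0.
case: (boolP [exists j, 0 <= v j]) => [/existsP [j hj]|]; first by exists j.
rewrite negb_exists => /forallP Hv'.
have Hv : forall j, v j < 0 by move=> j; rewrite ltNge; exact: Hv' j.
have Hu := @stepA R n C tau eta a b u v t HC Ht Ha Hopt0 Hv.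
case: Hopt0 => Hf Hopt.
pose j0 := Ordinal Hn.
have [jm _ Hjm] := @arg_maxP _ R 'I_n j0 xpredT v isT.
set m := - v jm.
have hm : 0 < m by rewrite /m oppr_gt0.
set c := m / 2.
have hc : 0 < c by rewrite /c divr_gt0.
set x := expR (c / tau).
have hx : 1 < x by rewrite /x -expR0 ltr_expR divr_gt0.
pose u' := fun i => u i - c.
pose v' := fun j => v j + c.
have Hf' : dual_feasible C u' v' t.
  move=> i j; have [H1 H2] := Hf i j; split => //; rewrite /u' /v'; lra.
have := Hopt u' v' t Hf'; rewrite /dual_obj.
set A := \sum_(i < n) expR (- u i / tau) * a i.
set B := \sum_(j < n) expR (- v j / tau) * b j.
have -> : \sum_(i < n) expR (- u' i / tau) * a i = x * A.
  rewrite /A mulr_sumr; apply: eq_bigr => i _.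
  rewrite /u' /x mulrA -expRD; congr (expR _ * _); rewrite mulrC; ring.
have -> : \sum_(j < n) expR (- v' j / tau) * b j = x^-1 * B.
  rewrite /B mulr_sumr; apply: eq_bigr => j _.
  rewrite /v' /x mulrA -expRN -expRD; congr (expR _ * _); ring.
have hA : A <= 1.
  rewrite -Ha1 /A; apply: ler_sum => i _.
  rewrite ler_piMl // -expR0 ler_expR mulNr oppr_le0 divr_ge0 // ltW //.
have hA0 : 0 <= A by rewrite /A sumr_ge0 // => i _; rewrite mulr_ge0 // ltW // expR_gt0.
have hB : x * x <= B.
  rewrite -[x * x]mulr1 -Hb1 /B mulr_sumr; apply: ler_sum => j _.
  rewrite ler_wpM2r // /x -expRD ler_expR -mulrDl ler_pM2r ?invr_gt0 //.
  have := Hjm j isT; rewrite /c /m /= => hj; lra.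
set S := \sum_(i < n) \sum_(j < n) _.
set Sa := \sum_(i < n) a i. set Sb := \sum_(j < n) b j.
move=> hle.
have hx0 : 0 < x by lra.
have hxi : x * x^-1 = 1 by rewrite mulfV // gt_eqF.
have h1 : A + B <= x * A + x^-1 * B.
  have : tau * (A + B) <= tau * (x * A + x^-1 * B).
    rewrite !mulrDr; move: hle; set P := tau * (x * A); set Q := tau * (x^-1 * B); set W := (4 * eta)^-1.
    rewrite !lerD2r -!addrA lerD2l -!opprD lerN2; exact.
  by rewrite ler_pM2l.
have h2 : x * (A + B) <= x * (x * A + x^-1 * B) by rewrite ler_pM2l.
rewrite [in X in _ <= X]mulrDr !mulrA hxi mul1r in h2.
have h3 : (x - 1) * B <= x * (x - 1) * A by nra.
have h4 : x * (x - 1) * A <= x * (x - 1) by rewrite ler_piMr // mulr_ge0 //; lra.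
have h5 : (x - 1) * (x * x) <= (x - 1) * B by rewrite ler_pM2l // subr_gt0.
have h6 : 0 < (x - 1) * x * (x - 1) by rewrite !mulr_gt0 // subr_gt0.
have e : (x - 1) * (x * x) = x * (x - 1) + (x - 1) * x * (x - 1) by ring.
move: h3 h4 h5 h6 e.
set p1 := (x - 1) * B. set p2 := x * (x - 1) * A. set p3 := x * (x - 1).
set p4 := (x - 1) * (x * x). set p5 := (x - 1) * x * (x - 1).
clear; lra.
Qed.

Lemma main_u (R : realType) (n : nat) (C : 'M[R]_n) (M tau eta : R)
  (a b : 'I_n -> R) (u v : 'I_n -> R) (t : 'M[R]_n) :
  (0 < n)%N ->
  (forall i j, 0 <= C i j) -> (forall i j, C i j <= M) -> 0 <= M ->
  0 < tau -> 0 < eta -> in_simplex a -> in_simplex b ->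
  (forall i, 0 < a i) ->
  dual_optimal C eta tau a b u v t ->
  forall i, u i <= M + 2 * eta.
Proof.
move=> Hn HC HM HM0 Ht He Has Hbs Ha Hopt0.
have [j0 hj0] := @stepB R n C tau eta a b u v t Hn HC Ht Has Hbs Ha Hopt0.
case: Hopt0 => Hf Hopt i.
rewrite leNgt; apply/negP => hui.
set D := u i - M.
set d := D - 2 * eta.
have hd : 0 < d by rewrite /d /D; lra.
pose u' := fun k => if k == i then u i - d else u k.
pose t' := \matrix_(k, j) (if k == i then Num.max 0 (u i - d + v j - C i j) else t k j).
have Hf' : dual_feasible C u' v t'.
  move=> k j; have [H1 H2] := Hf k j; rewrite /u' mxE.
  case: eqP => [->|_] //; by split; rewrite le_max lexx ?orbT.
have := Hopt u' v t' Hf'; rewrite /dual_obj.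
set S := \sum_(k < n) \sum_(j < n) t k j ^+ 2.
set S' := \sum_(k < n) \sum_(j < n) t' k j ^+ 2.
set A := \sum_(k < n) expR (- u k / tau) * a k.
set A' := \sum_(k < n) expR (- u' k / tau) * a k.
set B := \sum_(j < n) expR (- v j / tau) * b j.
set Sa := \sum_(k < n) a k. set Sb := \sum_(j < n) b j.
have hF : forall k j, t' k j ^+ 2 <= t k j ^+ 2.
  move=> k j; rewrite mxE; case: eqP => [->|_] //; have [H1 H2] := Hf i j.
  have h0 : 0 <= Num.max 0 (u i - d + v j - C i j) by rewrite le_max lexx.
  have h1 : Num.max 0 (u i - d + v j - C i j) <= t i j.
    rewrite ge_max H1 /=; lra.
  set w := Num.max _ _ in h0 h1 *; nra.
have hFi : 2 * d * D - d ^+ 2 <= t i j0 ^+ 2 - t' i j0 ^+ 2.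
  rewrite mxE eqxx.
  have [H1 H2] := Hf i j0.
  have hw : u i - d + v j0 - C i j0 >= 0.
    have := HM i j0; rewrite /d /D; lra.
  rewrite max_r //.
  have := HM i j0; rewrite /d /D => hm.
  nra.
have hS : 2 * d * D - d ^+ 2 <= S - S'.
  rewrite /S /S' -sumrB (bigD1 i) //= -sumrB (bigD1 j0) //=.
  apply: (le_trans hFi); rewrite -addrA lerDl addr_ge0 //.
    by rewrite sumr_ge0 // => j _; rewrite subr_ge0.
  rewrite sumr_ge0 // => k _; rewrite -sumrB sumr_ge0 // => j _; rewrite subr_ge0.
  exact: hF.
have hA : tau * (A' - A) <= d.
  rewrite /A' /A (@sum_upd _ _ (fun k => expR (- u k / tau) * a k)
     (fun k => expR (- u' k / tau) * a k) i); last first.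
    by move=> k /negbTE hk; rewrite /u' hk.
  rewrite /u' eqxx addrC addKr -mulrBl.
  have hz : - u i / tau <= - (u i - d) / tau.
    rewrite ler_pM2r ?invr_gt0 //; lra.
  have hc := @exp_chord R _ _ hz.
  have hy1 : expR (- (u i - d) / tau) <= 1.
    rewrite -expR0 ler_expR mulNr oppr_le0 divr_ge0 ?ltW //.
    rewrite /d /D; lra.
  have he : - (u i - d) / tau - - u i / tau = d / tau.
    by rewrite -mulrBl; congr (_ * _); ring.
  rewrite he in hc.
  have ha1 := @simplex_le1 R n a i Has.
  have ha0 := Ha i.
  have hey := expR_gt0 (- (u i - d) / tau).
  set y := expR (- (u i - d) / tau) in hc hy1 hey *.
  set z := expR (- u i / tau) in hc *.
  have htd : tau * (d / tau) = d by rewrite mulrC -mulrA mulVf ?gt_eqF // mulr1.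
  have : tau * ((y - z) * a i) <= tau * (y * (d / tau) * a i).
    by rewrite ler_pM2l // ler_wpM2r // ltW.
  have -> : tau * (y * (d / tau) * a i) = y * a i * d.
    by rewrite -[in RHS]htd; ring.
  have hya : y * a i <= 1 by rewrite -[1]mulr1 ler_pM // ltW.
  have : y * a i * d <= d.
    have e : d - y * a i * d = (1 - y * a i) * d by ring.
    have hd' : 2 * eta <= D by rewrite /d subr_gt0 in hd; exact: ltW.
    by rewrite -subr_ge0 e mulr_ge0 ?subr_ge0.
  move=> h1 h2; exact: le_trans h2 h1.
have hg : d < (4 * eta)^-1 * (2 * d * D - d ^+ 2).
  rewrite -(ltr_pM2l (_ : 0 < 4 * eta)); last by lra.
  rewrite mulrA mulfV ?mul1r; last by rewrite gt_eqF //; lra.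
  have e : 2 * d * D - d ^+ 2 - 4 * eta * d = d * d by rewrite /d; ring.
  by rewrite -subr_gt0 e mulr_gt0.
have hg' : (4 * eta)^-1 * (2 * d * D - d ^+ 2) <= (4 * eta)^-1 * (S - S').
  by rewrite ler_pM2l // invr_gt0; lra.
move=> hle.
set W := (4 * eta)^-1 in hle hg hg'.
set G := 2 * d * D - d ^+ 2 in hg hg'.
rewrite [W * (S - S')]mulrBr in hg'. rewrite mulrBr in hA. rewrite !mulNr in hle.
move: hle hA hg hg'.
set p1 := W * S. set p2 := W * S'. set p3 := tau * A. set p4 := tau * A'.
set p5 := W * G. set p6 := tau * B.
clear; lra.
Qed.

Lemma obj_tr (R : realType) (n : nat) (eta tau : R) (a b u v : 'I_n -> R) (t : 'M[R]_n) :
  dual_obj eta tau b a v u t^T = dual_obj eta tau a b u v t.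
Proof.
rewrite /dual_obj.
have -> : \sum_(i < n) \sum_(j < n) t^T i j ^+ 2 = \sum_(i < n) \sum_(j < n) t i j ^+ 2.
  rewrite exchange_big /=; apply: eq_bigr => i _; apply: eq_bigr => j _; by rewrite mxE.
ring.
Qed.

Lemma opt_tr (R : realType) (n : nat) (C : 'M[R]_n) (eta tau : R)
  (a b u v : 'I_n -> R) (t : 'M[R]_n) :
  dual_optimal C eta tau a b u v t -> dual_optimal C^T eta tau b a v u t^T.
Proof.
move=> [Hf Hopt]; split.
  move=> i j; have [H1 H2] := Hf j i; rewrite !mxE; split => //; lra.
move=> u' v' t' Hf'.
have Hf2 : dual_feasible C v' u' t'^T.
  move=> i j; have [H1 H2] := Hf' j i; rewrite !mxE; split => //.
  move: H2; rewrite mxE; lra.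
rewrite (@obj_tr _ _ _ _ _ _ _ _ t) -[t']trmxK obj_tr; exact: Hopt.
Qed.

Theorem mainTheorem10 (R : realType) (n : nat) (C : 'M[R]_n) (tau eta : R)
  (a b : 'I_n -> R) (u v : 'I_n -> R) (t : 'M[R]_n) :
  (1 <= n)%N ->
  (forall i j, 0 <= C i j) ->
  0 < tau ->
  0 < eta ->
  in_simplex a -> in_simplex b ->
  (forall i, 0 < a i) -> (forall j, 0 < b j) ->
  dual_optimal C eta tau a b u v t ->
  forall i j, u i <= mx_supnorm C + 2 * eta /\ v j <= mx_supnorm C + 2 * eta.
Proof.
move=> Hn HC Ht He Has Hbs Ha Hb Hopt i j.
set M := mx_supnorm C.
have HM : forall i j, C i j <= M.
  move=> k l; rewrite /M /mx_supnorm.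
  apply: le_trans (le_bigmax _ _ k).
  apply: le_trans (le_bigmax _ _ l).
  by rewrite ger0_norm.
have HM0 : 0 <= M by apply: le_trans (HM i i).
split.
  exact: (@main_u R n C M tau eta a b u v t Hn HC HM HM0 Ht He Has Hbs Ha Hopt).
apply: (@main_u R n C^T M tau eta b a v u t^T Hn) => //.
- by move=> k l; rewrite mxE.
- by move=> k l; rewrite mxE.
- exact: opt_tr.
Qed.
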